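(* Let $\eta(z)=q^{1/24}\prod_{n\ge1}(1-q^n)$, $q=e^{2\pi i z}$, and for $n\in\mathbb N_0$ let $r(n):=\#\{(n_1,\dots,n_5)\in\mathbb Z^5: n_1^2+n_2^2+2n_3^2+2n_4^2+2n_5^2=n\}$. Then, with all sums over $n\in\mathbb N_0$ in the indicated residue classes, \begin{multline*} \frac{\eta(z)^4\eta(2z)^4}{\eta(4z)^3}=-\sum_{n\equiv1\ (4)}r(n)q^n+\sum_{n\equiv3\ (4)}r(n)q^n-\frac15\sum_{n\equiv2\ (16)}r(n)q^n-\frac15\sum_{n\equiv4\ (16)}r(n)q^n+\frac15\sum_{n\equiv6\ (16)}r(n)q^n\\ -\frac37\sum_{n\equiv10\ (16)}r(n)q^n-\frac15\sum_{n\equiv12\ (16)}r(n)q^n+\frac15\sum_{n\equiv14\ (16)}r(n)q^n+\frac15\sum_{n\equiv0\ (8)}\left(r(n)+4r\left(\tfrac n4\right)\right)q^n. \end{multline*} *)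

(* Defs.v *)
From mathcomp Require Import all_boot all_order all_algebra.
Set Implicit Arguments. Unset Strict Implicit. Unset Printing Implicit Defensive.
Import Order.TTheory GRing.Theory Num.Theory.
Local Open Scope ring_scope.

Definition quadQ (a b c d e : int) : int :=
  a ^+ 2 + b ^+ 2 + 2 * c ^+ 2 + 2 * d ^+ 2 + 2 * e ^+ 2.

Definition box (n : nat) : seq int := [seq (i%:Z - n%:Z) | i <- iota 0 (2 * n).+1].

(* r(n) = #{(n1,..,n5) in Z^5 : quadQ n1 .. n5 = n}  (restricted to the box
   [-n,n]^5, which contains all solutions). *)
Definition r (n : nat) : nat :=
  (\sum_(a <- box n) \sum_(b <- box n) \sum_(c <- box n) \sum_(d <- box n)
     \sum_(e <- box n) (quadQ a b c d e == n%:Z : nat))%N.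

(* Truncation of eta(z)^4 eta(2z)^4 / eta(4z)^3
   = prod_{n>=1} (1-q^n)^4 (1-q^{2n})^4 (1-q^{4n})^{-3}   (q-power: (4+8-12)/24 = 0)
   which agrees with the infinite product in all coefficients of q^k, k <= N;
   1/(1-x) is expanded as the geometric series. *)
Definition eta_quot_trunc (N : nat) : {poly rat} :=
  \prod_(1 <= n < N.+1)
    ((1 - 'X^n) ^+ 4 * (1 - 'X^(2 * n)) ^+ 4
      * (\sum_(k < N.+1) 'X^(4 * n * k)) ^+ 3).

Definition eta_quot_coef (N : nat) : rat := (eta_quot_trunc N)`_N.

Definition rhs_coef (N : nat) : rat :=
  if (N %% 4 == 1)%N then - (r N)%:R
  else if (N %% 4 == 3)%N then (r N)%:R
  else if (N %% 16 == 2)%N then - (1 / 5) * (r N)%:R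
  else if (N %% 16 == 4)%N then - (1 / 5) * (r N)%:R
  else if (N %% 16 == 6)%N then (1 / 5) * (r N)%:R
  else if (N %% 16 == 10)%N then - (3 / 7) * (r N)%:R
  else if (N %% 16 == 12)%N then - (1 / 5) * (r N)%:R
  else if (N %% 16 == 14)%N then (1 / 5) * (r N)%:R
  else if (N %% 8 == 0)%N then (1 / 5) * ((r N)%:R + 4 * (r (N %/ 4))%:R)
  else 0.

(* Main.v *)
Require Import Defs.
From mathcomp Require Import all_boot all_order all_algebra.
From mathcomp Require Import ring zify.
Set Implicit Arguments. Unset Strict Implicit. Unset Printing Implicit Defensive.
Import Order.TTheory GRing.Theory Num.Theory.
Local Open Scope ring_scope.

Notation P := {poly rat}.

Definition eqm (K : nat) (p q : P) := forall i, (i <= K)%N -> p`_i = q`_i.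

Lemma eqm_refl K p : eqm K p p. Proof. by []. Qed.
Lemma eqm_sym K p q : eqm K p q -> eqm K q p. Proof. by move=> h i hi; rewrite h. Qed.
Lemma eqm_trans K p q s : eqm K p q -> eqm K q s -> eqm K p s.
Proof. by move=> h1 h2 i hi; rewrite h1 // h2. Qed.
Lemma eqm_le K K' p q : (K' <= K)%N -> eqm K p q -> eqm K' p q.
Proof. by move=> hk h i hi; apply: h; apply: leq_trans hk. Qed.
Lemma eqmD K p q p' q' : eqm K p q -> eqm K p' q' -> eqm K (p + p') (q + q').
Proof. by move=> h1 h2 i hi; rewrite !coefD h1 // h2. Qed.
Lemma eqmN K p q : eqm K p q -> eqm K (- p) (- q).
Proof. by move=> h i hi; rewrite !coefN h. Qed.
Lemma eqmB K p q p' q' : eqm K p q -> eqm K p' q' -> eqm K (p - p') (q - q').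
Proof. by move=> h1 h2; apply: eqmD => //; apply: eqmN. Qed.
Lemma eqmM K p q p' q' : eqm K p q -> eqm K p' q' -> eqm K (p * p') (q * q').
Proof.
move=> h1 h2 i hi; rewrite !coefM; apply: eq_bigr => j _.
have hj : (j <= i)%N by rewrite -ltnS.
rewrite h1 ?(leq_trans hj) // h2 //; apply: leq_trans hi; exact: leq_subr.
Qed.
Lemma eqmX K p q n : eqm K p q -> eqm K (p ^+ n) (q ^+ n).
Proof. by move=> h; elim: n => [|n IH]; rewrite ?expr0 // !exprS; apply: eqmM. Qed.
Lemma eqm_prod K (I : Type) (r : seq I) (F G : I -> P) :
  (forall i, eqm K (F i) (G i)) -> eqm K (\prod_(i <- r) F i) (\prod_(i <- r) G i).
Proof.
move=> h; elim: r => [|a r IH]; rewrite ?big_nil // !big_cons; exact: eqmM.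
Qed.
Lemma eqm_sum K (I : Type) (r : seq I) (F G : I -> P) :
  (forall i, eqm K (F i) (G i)) -> eqm K (\sum_(i <- r) F i) (\sum_(i <- r) G i).
Proof.
move=> h; elim: r => [|a r IH]; rewrite ?big_nil // !big_cons; exact: eqmD.
Qed.
Lemma eqm_comp K d p q : (0 < d)%N -> eqm K p q -> eqm K (p \Po 'X^d) (q \Po 'X^d).
Proof.
move=> hd h i hi; rewrite !coef_comp_poly_Xn //; case: ifP => // _.
apply: h; apply: leq_trans hi; exact: leq_div.
Qed.
Lemma eqmXn K a p q : eqm K p q -> eqm (K + a) ('X^a * p) ('X^a * q).
Proof.
move=> h i hi; rewrite !coefXnM; case: ifP => // /negbT; rewrite -leqNgt => ha.
apply: h; lia.
Qed.
Lemma eqm_high K a p : (K < a)%N -> eqm K ('X^a * p) 0.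
Proof. by move=> ha i hi; rewrite coefXnM coef0 ifT //; apply: leq_ltn_trans ha. Qed.
Lemma eqm_1X K a : (K < a)%N -> eqm K (1 - 'X^a) 1.
Proof.
move=> ha; have := eqm_high 1 ha; rewrite mulr1 => h.
by move=> i hi; rewrite coefB h // coef0 subr0.
Qed.
Lemma eqm_cancel K (f p q : P) : f`_0 = 1 -> eqm K (f * p) (f * q) -> eqm K p q.
Proof.
move=> f0 h.
suff H : forall i, (i <= K)%N -> (p - q)`_i = 0.
  by move=> i hi; apply/eqP; rewrite -subr_eq0 -coefB H.
have h' : forall i, (i <= K)%N -> (f * (p - q))`_i = 0.
  by move=> i hi; rewrite mulrBr coefB h // subrr.
elim/ltn_ind => i IH hi.
have := h' i hi; rewrite coefMr big_ord_recr /= subnn f0 mul1r.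
rewrite big1 ?add0r // => j _.
rewrite IH ?mulr0 //; apply: leq_trans hi; exact: ltnW.
Qed.

Fixpoint qb (m k : nat) : P :=
  match m, k with
  | _, 0 => 1
  | 0, _.+1 => 0
  | m'.+1, k'.+1 => qb m' k' + 'X^(2 * k'.+1) * qb m' k'.+1
  end.

Definition qp (a : nat) : P := \prod_(i < a) (1 - 'X^(2 * i.+1)).

Lemma qpS a : qp a.+1 = qp a * (1 - 'X^(2 * a.+1)).
Proof. by rewrite /qp big_ord_recr. Qed.

Lemma qb_gt m k : (m < k)%N -> qb m k = 0.
Proof.
elim: m k => [|m IH] [|k] //= hk.
by rewrite !IH ?mulr0 ?addr0 // ltnW.
Qed.

Lemma qb_closed m k : (k <= m)%N -> qp k * qp (m - k) * qb m k = qp m.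
Proof.
elim: m k => [|m IH] [|k] //= hk.
- by rewrite /qp !big_ord0 !mulr1.
- by rewrite /qp big_ord0 subn0 mul1r mulr1.
rewrite subSS mulrDr.
have h1 : qp k.+1 * qp (m - k) * qb m k = (1 - 'X^(2 * k.+1)) * qp m.
  by rewrite qpS -(IH k) //; ring.
rewrite h1.
have [hkm|hkm] : (k < m)%N \/ k = m by lia.
2: by rewrite hkm qb_gt // !mulr0 addr0 qpS mulrC.
have e : (m - k = (m - k.+1).+1)%N by lia.
have h2 := IH k.+1 hkm.
have e2 : qp (m - k) = qp (m - k.+1) * (1 - 'X^(2 * (m - k))) by rewrite {1}e qpS -e.
rewrite e2 [qp m.+1]qpS.
have -> : (2 * m.+1 = 2 * (m - k) + 2 * k.+1)%N by lia.
rewrite exprD -h2; ring.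
Qed.

Definition T m b : P := \sum_(k < m.+1) (-1 : P) ^+ k * qb m k * 'X^(k * k + b * k).

Lemma sum_shift (m : nat) (f : nat -> P) : f m.+1 = 0 ->
  \sum_(k < m.+1) f k = f 0%N + \sum_(i < m.+1) f i.+1.
Proof.
move=> h; transitivity (\sum_(k < m.+2) f k); first by rewrite [in RHS]big_ord_recr /= h addr0.
by rewrite big_ord_recl.
Qed.

Lemma sum_recl (m : nat) (f : nat -> P) :
  \sum_(k < m.+2) f k = f 0%N + \sum_(i < m.+1) f i.+1.
Proof. by rewrite big_ord_recl. Qed.

Lemma qb_m0 m : qb m 0 = 1. Proof. by case: m. Qed.

Lemma T_rec m b : T m.+1 b = (1 - 'X^(b.+1)) * T m (b + 2).
Proof.
have hA : \sum_(i < m.+1) (-1) ^+ i.+1 * qb m i * 'X^(i.+1 * i.+1 + b * i.+1)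
          = - 'X^(b.+1) * T m (b + 2).
  rewrite /T mulr_sumr; apply: eq_bigr => i _.
  have -> : (i.+1 * i.+1 + b * i.+1 = b.+1 + (i * i + (b + 2) * i))%N by lia.
  rewrite exprD exprS; ring.
have hB : 1 + \sum_(i < m.+1) (-1) ^+ i.+1 * ('X^(2 * i.+1) * qb m i.+1)
                 * 'X^(i.+1 * i.+1 + b * i.+1) = T m (b + 2).
  rewrite /T (@sum_shift m (fun k => (-1 : P) ^+ k * qb m k * 'X^(k * k + (b + 2) * k))); last first.
    by rewrite qb_gt // mulr0 mul0r.
  rewrite /= qb_m0 expr0 !mul1r !muln0 !addn0 expr0; congr (_ + _).
  apply: eq_bigr => i _.
  have -> : (i.+1 * i.+1 + (b + 2) * i.+1 = 2 * i.+1 + (i.+1 * i.+1 + b * i.+1))%N by lia.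
  rewrite !exprD; ring.
rewrite /T (@sum_recl m (fun k => (-1 : P) ^+ k * qb m.+1 k * 'X^(k * k + b * k))) -/(T m (b + 2)).
rewrite /= expr0 !mul1r.
have -> : (0 * 0 + b * 0 = 0)%N by lia.
rewrite expr0.
have -> : \sum_(i < m.+1) (-1) ^+ i.+1 * qb m.+1 i.+1 * 'X^(i.+1 * i.+1 + b * i.+1)
   = \sum_(i < m.+1) (-1) ^+ i.+1 * qb m i * 'X^(i.+1 * i.+1 + b * i.+1)
   + \sum_(i < m.+1) (-1) ^+ i.+1 * ('X^(2 * i.+1) * qb m i.+1) * 'X^(i.+1 * i.+1 + b * i.+1).
  by rewrite -big_split; apply: eq_bigr => i _ /=; ring.
rewrite hA -hB; ring.
Qed.

Lemma T_closed m b : T m b = \prod_(i < m) (1 - 'X^((2 * i + b).+1)).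
Proof.
elim: m b => [|m IH] b.
  rewrite /T big_ord1 big_ord0 /= !mul1r.
  have -> : (0 * 0 + b * 0 = 0)%N by lia.
  by rewrite expr0.
rewrite T_rec IH big_ord_recl /= muln0 add0n; congr (_ * _).
by apply: eq_bigr => i _; rewrite /bump leq0n; congr (1 - 'X^_); lia.
Qed.

Definition dist (k c : nat) := ((k - c) + (c - k))%N.

Definition U m c : P := \sum_(k < m.+1) (-1 : P) ^+ k * qb m k * 'X^(dist k c ^ 2).

Lemma dist_sq_id i c : (2 * c + 1 + dist i.+1 c ^ 2 = 2 * i.+1 + dist i c ^ 2)%N.
Proof.
rewrite /dist; case: (leqP c i) => h.
  have -> : (i.+1 - c = (i - c).+1)%N by lia.
  have -> : (c - i.+1 = 0)%N by lia.
  have -> : (c - i = 0)%N by lia.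
  have [t ->] : exists t, i = (c + t)%N by exists (i - c)%N; lia.
  have -> : (c + t - c = t)%N by lia.
  rewrite !addn0; nia.
have [t ->] : exists t, c = (i.+1 + t)%N by exists (c - i.+1)%N; lia.
have -> : (i.+1 - (i.+1 + t) = 0)%N by lia.
have -> : (i - (i.+1 + t) = 0)%N by lia.
have -> : (i.+1 + t - i.+1 = t)%N by lia.
have -> : (i.+1 + t - i = t.+1)%N by lia.
rewrite !add0n; nia.
Qed.

Lemma U_rec m c : U m.+1 c.+1 = ('X^(2 * c + 1) - 1) * U m c.
Proof.
have hA : \sum_(i < m.+1) (-1) ^+ i.+1 * qb m i * 'X^(dist i.+1 c.+1 ^ 2) = - U m c.
  rewrite /U -sumrN; apply: eq_bigr => i _.
  have -> : dist i.+1 c.+1 = dist i c by rewrite /dist; lia.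
  rewrite exprS; ring.
have hB : 'X^(dist 0 c.+1 ^ 2) + \sum_(i < m.+1) (-1) ^+ i.+1 * ('X^(2 * i.+1) * qb m i.+1)
                 * 'X^(dist i.+1 c.+1 ^ 2) = 'X^(2 * c + 1) * U m c.
  rewrite /U (@sum_shift m (fun k => (-1 : P) ^+ k * qb m k * 'X^(dist k c ^ 2))); last first.
    by rewrite qb_gt // mulr0 mul0r.
  rewrite /= qb_m0 expr0 !mul1r mulrDr mulr_sumr; congr (_ + _).
    by rewrite -exprD /dist; congr 'X^_; nia.
  apply: eq_bigr => i _.
  have -> : dist i.+1 c.+1 = dist i c by rewrite /dist; lia.
  have e := dist_sq_id i c.
  transitivity ((-1) ^+ i.+1 * qb m i.+1 * 'X^(2 * i.+1 + dist i c ^ 2) : P).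
    by rewrite exprD; ring.
  rewrite -e !exprD; ring.
rewrite /U (@sum_recl m (fun k => (-1 : P) ^+ k * qb m.+1 k * 'X^(dist k c.+1 ^ 2))) -/(U m c).
rewrite /= expr0 !mul1r.
have -> : \sum_(i < m.+1) (-1) ^+ i.+1 * qb m.+1 i.+1 * 'X^(dist i.+1 c.+1 ^ 2)
   = \sum_(i < m.+1) (-1) ^+ i.+1 * qb m i * 'X^(dist i.+1 c.+1 ^ 2)
   + \sum_(i < m.+1) (-1) ^+ i.+1 * ('X^(2 * i.+1) * qb m i.+1) * 'X^(dist i.+1 c.+1 ^ 2).
  by rewrite -big_split; apply: eq_bigr => i _ /=; ring.
rewrite hA addrCA hB; ring.
Qed.

Lemma U_shift n c : U (n + c) c = \prod_(i < c) ('X^(2 * i + 1) - 1) * U n 0.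
Proof.
elim: c => [|c IH]; first by rewrite addn0 big_ord0 mul1r.
by rewrite addnS U_rec IH big_ord_recr /=; ring.
Qed.

Lemma U0 n : U n 0 = \prod_(i < n) (1 - 'X^(2 * i + 1)).
Proof.
have -> : U n 0 = T n 0.
  rewrite /U /T; apply: eq_bigr => k _; congr (_ * 'X^_); rewrite /dist; nia.
rewrite T_closed; apply: eq_bigr => i _; congr (1 - 'X^_); lia.
Qed.

Definition Op (n : nat) : P := \prod_(i < n) (1 - 'X^(2 * i + 1)).

Lemma fin_jtp n : U (2 * n) n = (-1) ^+ n * Op n ^+ 2.
Proof.
have -> : (2 * n = n + n)%N by lia.
rewrite U_shift U0 /Op.
have -> : \prod_(i < n) ('X^(2 * i + 1) - 1) = \prod_(i < n) (- (1 - 'X^(2 * i + 1)) : P).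
  by apply: eq_bigr => i _; rewrite opprB.
rewrite prodrN card_ord; ring.
Qed.

Definition bsum (K : nat) (f : nat -> P) : P := \sum_(j <- box K) f (absz j).

Lemma bsumE K f : bsum K f = \sum_(i < (2 * K).+1) f (dist i K).
Proof.
rewrite /bsum /box big_map.
change (iota 0 (2 * K).+1) with (index_iota 0 (2 * K).+1).
rewrite big_mkord; apply: eq_bigr => i _; congr f; rewrite /dist; lia.
Qed.

Lemma sgn_par (a b t : nat) : a = (b + 2 * t)%N -> (-1 : P) ^+ a = (-1) ^+ b.
Proof. by move=> ->; rewrite exprD exprM expr2 mulrNN mulr1 expr1n mulr1. Qed.

Definition thm K := bsum K (fun t => (-1) ^+ t * 'X^(t ^ 2)).

Lemma qp0 a : (qp a)`_0 = 1.
Proof.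
elim: a => [|a IH]; first by rewrite /qp big_ord0 coefC.
by rewrite qpS coef0M IH coefB coef1 coefXn /= mul1r subr0.
Qed.

Lemma qp_approx e a : (e <= a)%N -> eqm (2 * e + 1) (qp a) (qp e).
Proof.
elim: a => [|a IH] h.
  by move: h; rewrite leqn0 => /eqP ->.
case: (ltngtP e a.+1) h => // [h|->] _; last by [].
rewrite qpS -[qp e]mulr1; apply: eqmM; first exact: IH.
apply: eqm_1X; lia.
Qed.

Lemma qb_approx K k : (k <= 2 * K)%N ->
  eqm (2 * minn k (2 * K - k) + 1) (qp K * qb (2 * K) k) 1.
Proof.
move=> hk; set e := minn k (2 * K - k).
have hek : (e <= k)%N by rewrite geq_minl.
have hek' : (e <= 2 * K - k)%N by rewrite geq_minr.
have heK : (e <= K)%N by rewrite /e; lia.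
have hcl := qb_closed hk.
have G1 : eqm (2 * e + 1) (qp e * (qp e * qb (2 * K) k)) (qp e * 1).
  rewrite mulr1 mulrA; apply: eqm_trans (qp_approx (_ : e <= 2 * K)%N); last by lia.
  rewrite -hcl; apply: eqmM => //; apply: eqmM; apply: eqm_sym; exact: qp_approx.
have G2 := eqm_cancel (qp0 e) G1.
apply: eqm_trans G2; apply: eqmM => //; exact: qp_approx.
Qed.

Lemma term_approx K k : (k <= 2 * K)%N ->
  eqm K ('X^(dist k K ^ 2) * (qp K * qb (2 * K) k)) ('X^(dist k K ^ 2)).
Proof.
move=> hk; set d := dist k K.
have hmin : minn k (2 * K - k) = (K - d)%N by rewrite /d /dist; lia.
case: (leqP (d ^ 2) K) => hd.
  have h := qb_approx hk; rewrite hmin in h.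
  have h' : eqm (K - d ^ 2) (qp K * qb (2 * K) k) 1.
    apply: eqm_le h.
    have : (d <= K)%N by rewrite /d /dist; lia.
    move=> hdK; nia.
  have := eqmXn (a:=d ^ 2) h'; rewrite subnK // mulr1; exact.
apply: eqm_trans (eqm_high _ hd) _.
rewrite -[X in eqm _ _ X]mulr1; apply: eqm_sym; exact: eqm_high.
Qed.

Lemma sgn_sq K : (-1 : P) ^+ K * (-1) ^+ K = 1.
Proof. by rewrite -exprD (@sgn_par _ 0 K) //; lia. Qed.

Lemma jtp K : eqm K (thm K) (qp K * Op K ^+ 2).
Proof.
have h1 : qp K * U (2 * K) K
   = \sum_(k < (2 * K).+1) (-1) ^+ k * ('X^(dist k K ^ 2) * (qp K * qb (2 * K) k)).
  rewrite /U mulr_sumr; apply: eq_bigr => k _; ring.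
have h2 : eqm K (\sum_(k < (2 * K).+1) (-1) ^+ k * ('X^(dist k K ^ 2) * (qp K * qb (2 * K) k)))
                (\sum_(k < (2 * K).+1) (-1) ^+ k * 'X^(dist k K ^ 2)).
  apply: eqm_sum => k; apply: eqmM => //; apply: term_approx.
  by rewrite -ltnS ltn_ord.
have h3 : \sum_(k < (2 * K).+1) (-1) ^+ k * 'X^(dist k K ^ 2) = (-1) ^+ K * thm K.
  rewrite /thm bsumE mulr_sumr; apply: eq_bigr => k _.
  rewrite mulrA -exprD; congr (_ * _).
  have [t ht] : exists t, (K + dist k K = k + 2 * t)%N.
    case: (leqP k K) => hkK.
      by exists (K - k)%N; rewrite /dist; lia.
    by exists 0%N; rewrite /dist; lia.
  by rewrite (sgn_par ht).
rewrite fin_jtp h3 in h1 h2.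
have h4 := eqmM (@eqm_refl K ((-1) ^+ K)) h2.
rewrite -h1 in h4.
have e1 : (-1) ^+ K * (qp K * ((-1) ^+ K * Op K ^+ 2)) = qp K * Op K ^+ 2.
  transitivity (qp K * ((-1) ^+ K * (-1) ^+ K) * Op K ^+ 2); first ring.
  by rewrite sgn_sq mulr1.
have e2 : (-1) ^+ K * ((-1) ^+ K * thm K) = thm K by rewrite mulrA sgn_sq mul1r.
rewrite e1 e2 in h4; exact: eqm_sym.
Qed.

Lemma sum_recl_gen (m : nat) (f : nat -> P) :
  \sum_(k < m.+1) f k = f 0%N + \sum_(i < m) f i.+1.
Proof. by rewrite big_ord_recl. Qed.

Lemma bsumS K f : bsum K.+1 f = bsum K f + f K.+1 *+ 2.
Proof.
rewrite !bsumE.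
have -> : (2 * K.+1).+1 = ((2 * K).+1).+2 by rewrite mulnS.
rewrite (@sum_recl_gen ((2 * K).+2) (fun i => f (dist i K.+1))) big_ord_recr /=.
have -> : dist 0 K.+1 = K.+1 by rewrite /dist; lia.
have -> : dist (2 * K).+2 K.+1 = K.+1 by rewrite /dist; lia.
have -> : \sum_(i < (2 * K).+1) f (dist i.+1 K.+1) = \sum_(i < (2 * K).+1) f (dist i K).
  by apply: eq_bigr => i _; congr f; rewrite /dist; lia.
rewrite mulr2n; set S := \sum_(i < _) _; set a := f _; rewrite addrA [a + S]addrC.
by rewrite -addrA.
Qed.

Lemma bsum0 f : bsum 0 f = f 0%N.
Proof. by rewrite bsumE big_ord1. Qed.

Lemma bsumD K f g : bsum K (fun t => f t + g t) = bsum K f + bsum K g.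
Proof. by rewrite /bsum big_split. Qed.

Lemma bsum_ext K f g : (forall t, f t = g t) -> bsum K f = bsum K g.
Proof. by move=> h; rewrite /bsum; apply: eq_bigr => j _. Qed.

Lemma bsum_comp K f d : bsum K f \Po 'X^d = bsum K (fun t => f t \Po 'X^d).
Proof. by rewrite /bsum rmorph_sum. Qed.

Lemma bsum_trunc n K f : (n <= K)%N -> (forall t, (n < t)%N -> eqm n (f t) 0) ->
  eqm n (bsum K f) (bsum n f).
Proof.
move=> hK hf; elim: K hK => [|K IH] hK.
  by move: hK; rewrite leqn0 => /eqP ->.
case: (ltngtP n K.+1) hK => // [h|->] _; last by [].
rewrite bsumS -[bsum n f]addr0; apply: eqmD; first exact: IH.
by move=> i hi; rewrite coefMn (hf _ h) // coef0 mul0rn.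
Qed.

Definition th K := bsum K (fun t => 'X^(t ^ 2)).
Definition Ev K := bsum K (fun t => if odd t then 0 else 'X^(t ^ 2)).
Definition Od K := bsum K (fun t => if odd t then 'X^(t ^ 2) else 0).
Definition sq (p : P) := p \Po 'X^2.

Lemma thE K : th K = Ev K + Od K.
Proof. by rewrite /th /Ev /Od -bsumD; apply: bsum_ext => t; case: odd; rewrite ?add0r ?addr0. Qed.

Lemma thmE K : thm K = Ev K - Od K.
Proof.
rewrite /thm /Ev /Od /bsum -sumrB; apply: eq_bigr => j _.
by rewrite -signr_odd; case: odd; rewrite ?expr0 ?expr1 ?mul1r ?mulN1r ?subr0 ?sub0r.
Qed.

Lemma th_trunc n K : (n <= K)%N -> eqm n (th K) (th n).
Proof.
move=> h; apply: bsum_trunc => // t ht.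
rewrite -[X in eqm _ X _]mulr1; apply: eqm_high; nia.
Qed.

Lemma Ev_J3 K : Ev K = th K./2 \Po 'X^4.
Proof.
elim: K => [|K IH]; first by rewrite /Ev /th !bsum0 /= comp_Xn_poly.
rewrite /Ev bsumS -/(Ev K) IH /= uphalf_half.
case hK: (odd K) => /=.
  rewrite add1n {2}/th bsumS raddfD raddfMn /= comp_Xn_poly -exprM -/(th K./2).
  congr (_ + 'X^_ *+ 2).
  have [s hs] : exists s, K = s.*2.+1 by exists K./2; rewrite -{1}(odd_double_half K) hK.
  have -> : K./2 = s by rewrite hs /= uphalf_double.
  rewrite hs -addnn; nia.
by rewrite add0n mul0rn addr0.
Qed.

Definition cls (d c : nat) (p : P) := forall i, (i %% d != c %% d)%N -> p`_i = 0.

Lemma cls0 d c : cls d c 0. Proof. by move=> i _; rewrite coef0. Qed.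
Lemma clsD d c p q : cls d c p -> cls d c q -> cls d c (p + q).
Proof. by move=> h1 h2 i hi; rewrite coefD h1 // h2 // addr0. Qed.
Lemma clsN d c p : cls d c p -> cls d c (- p).
Proof. by move=> h i hi; rewrite coefN h // oppr0. Qed.
Lemma clsB d c p q : cls d c p -> cls d c q -> cls d c (p - q).
Proof. by move=> h1 h2; apply: clsD => //; apply: clsN. Qed.
Lemma clsMn d c p n : cls d c p -> cls d c (p *+ n).
Proof. by move=> h i hi; rewrite coefMn h // mul0rn. Qed.
Lemma cls_sum d c (I : Type) (r : seq I) (F : I -> P) :
  (forall i, cls d c (F i)) -> cls d c (\sum_(i <- r) F i).
Proof.
move=> h; elim: r => [|a r IH]; rewrite ?big_nil ?big_cons; [exact: cls0|exact: clsD].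
Qed.
Lemma clsXn d c k : (k %% d = c %% d)%N -> cls d c 'X^k.
Proof. by move=> h i hi; rewrite coefXn; case: eqP => // hik; move: hi; rewrite hik h eqxx. Qed.
Lemma cls1 d : cls d 0 1.
Proof. by rewrite -(expr0 'X); apply: clsXn. Qed.
Lemma clsM d a b p q : cls d a p -> cls d b q -> cls d (a + b) (p * q).
Proof.
move=> h1 h2 i hi; rewrite coefM big1 // => j _.
case: (eqVneq (j %% d) (a %% d))%N => hj; last by rewrite h1 // mul0r.
have hj' : (j <= i)%N by rewrite -ltnS.
case: (eqVneq ((i - j) %% d) (b %% d))%N => hj2; last by rewrite h2 // mulr0.
exfalso; move/eqP: hi; apply.
by rewrite -(subnKC hj') -modnDm hj hj2 modnDm.
Qed.
Lemma clsX d a p n : cls d a p -> cls d (n * a) (p ^+ n).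
Proof.
move=> h; elim: n => [|n IH]; first by rewrite expr0 mul0n; apply: cls1.
by rewrite exprS mulSn; apply: clsM.
Qed.
Lemma cls_dvd d e c p : (e %| d)%N -> cls d c p -> cls e c p.
Proof.
move=> hed h i hi; apply: h; apply: contra hi => /eqP hh.
by rewrite -(modn_dvdm i hed) hh modn_dvdm.
Qed.
Lemma cls_eq d c c' p : (c %% d = c' %% d)%N -> cls d c p -> cls d c' p.
Proof. by move=> e h i hi; apply: h; rewrite e. Qed.
Lemma cls_comp k d c p : (0 < k)%N -> cls d c p -> cls (k * d) (k * c) (p \Po 'X^k).
Proof.
move=> hk h i hi; rewrite coef_comp_poly_Xn //; case: ifP => // /dvdnP [j hj].
rewrite hj mulnK //; apply: h; apply: contra hi => /eqP hh.
by rewrite hj mulnC -!muln_modr hh.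
Qed.
Lemma clsC d (a : rat) : cls d 0 a%:P.
Proof. by move=> i hi; rewrite coefC; case: eqP => // e; move: hi; rewrite e mod0n eqxx. Qed.
Lemma cls_nat d n : cls d 0 (n%:R : P).
Proof. by rewrite -polyC_natr; apply: clsC. Qed.

Lemma sq_odd t : odd t -> (t ^ 2 %% 8 = 1)%N.
Proof.
move=> ht; have [s hs] : exists s, t = s.*2.+1 by exists t./2; rewrite -{1}(odd_double_half t) ht.
have [u hu] : exists u, (s * s.+1 = u.*2)%N.
  exists (s * s.+1)./2; rewrite -[LHS](odd_double_half) oddM /=.
  by case: (odd s).
rewrite hs -addnn; nia.
Qed.
Lemma sq_even t : ~~ odd t -> (t ^ 2 %% 4 = 0)%N.
Proof.
move=> ht; have [s hs] : exists s, t = s.*2 by exists t./2; rewrite -{1}(odd_double_half t) (negbTE ht).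
rewrite hs -addnn; nia.
Qed.

Lemma cls_Ev K : cls 4 0 (Ev K).
Proof.
apply: cls_sum => j; case: ifP => h; first exact: cls0.
by apply: clsXn; rewrite sq_even ?h.
Qed.
Lemma cls_Od K : cls 8 1 (Od K).
Proof.
apply: cls_sum => j; case: ifP => h; last exact: cls0.
by apply: clsXn; rewrite sq_odd.
Qed.
Lemma cls_sEv K : cls 8 0 (sq (Ev K)).
Proof. exact: (cls_comp (k:=2) _ (cls_Ev K)). Qed.
Lemma cls_sOd K : cls 16 2 (sq (Od K)).
Proof. exact: (cls_comp (k:=2) _ (cls_Od K)). Qed.

Lemma coef_compN (p : P) i : (p \Po - 'X)`_i = (-1) ^+ i * p`_i.
Proof.
rewrite coef_comp_poly.
have e : forall j : nat, ((- 'X : P) ^+ j)`_i = (-1) ^+ j * (i == j)%:R.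
  move=> j.
  have -> : (- 'X : P) ^+ j = ((-1) ^+ j)%:P * 'X^j.
    elim: j => [|j IH]; first by rewrite !expr0 mulr1.
    by rewrite !exprS IH polyCM polyCN polyC1; ring.
  by rewrite coefCM coefXn.
under eq_bigr => j _ do rewrite e.
case: (ltnP i (size p)) => h.
  rewrite (bigD1 (Ordinal h)) //= eqxx mulr1 big1 ?addr0; first by rewrite mulrC.
  move=> j hj; have : i != j by apply: contra hj => /eqP hij; apply/eqP/val_inj.
  by move/negbTE => ->; rewrite !mulr0.
rewrite nth_default // mulr0 big1 // => j _.
have : i != j by rewrite neq_ltn (leq_trans (ltn_ord j) h) orbT.
by move/negbTE => ->; rewrite !mulr0.
Qed.

Lemma eqm_compN K p q : eqm K p q -> eqm K (p \Po - 'X) (q \Po - 'X).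
Proof. by move=> h i hi; rewrite !coef_compN h. Qed.

Lemma sgn_even (a s : nat) : a = (2 * s)%N -> (-1 : P) ^+ a = 1.
Proof. by move=> h; rewrite (@sgn_par a 0 s) ?expr0 //; lia. Qed.

Lemma sgn_oddn (a s : nat) : a = (2 * s + 1)%N -> (-1 : P) ^+ a = -1.
Proof. by move=> h; rewrite (@sgn_par a 1 s) ?expr1 //; lia. Qed.

Lemma th_compN K : thm K \Po - 'X = th K.
Proof.
rewrite /thm /th /bsum rmorph_sum; apply: eq_bigr => j _ /=.
rewrite rmorphM rmorphXn /= rmorphN1 comp_Xn_poly [(- 'X) ^+ _]exprNn mulrA -exprD.
set t := absz j.
have [s hs] : exists s, (t + t ^ 2 = 2 * s)%N.
  exists (t * t.+1)./2; rewrite -[LHS](odd_double_half) -muln2.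
  have -> : (t + t ^ 2 = t * t.+1)%N by nia.
  by rewrite oddM /=; case: (odd t); rewrite /= ?add0n mulnC.
by rewrite (sgn_even hs) mul1r.
Qed.

Definition AA K : P := \prod_(i < K) (1 - 'X^(i.+1)).

Lemma AA2 K : AA (2 * K) = qp K * Op K.
Proof.
elim: K => [|K IH]; first by rewrite /AA /qp /Op !big_ord0 mulr1.
have -> : (2 * K.+1 = (2 * K).+2)%N by lia.
rewrite /AA !big_ord_recr /= -/(AA (2 * K)) IH qpS /Op big_ord_recr /= -/(Op K).
have -> : ((2 * K).+1 = 2 * K + 1)%N by lia.
have -> : ((2 * K + 1).+1 = 2 * K.+1)%N by lia.
ring.
Qed.

Lemma AA_trunc K M : (K <= M)%N -> eqm K (AA M) (AA K).
Proof.
elim: M => [|M IH] h.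
  by move: h; rewrite leqn0 => /eqP ->.
case: (ltngtP K M.+1) h => // [h|->] _; last by [].
rewrite [AA M.+1]/AA big_ord_recr /= -/(AA M) -[AA K]mulr1; apply: eqmM; first exact: IH.
apply: eqm_1X; lia.
Qed.

Lemma qp_sq K : qp K = sq (AA K).
Proof.
rewrite /sq /AA /qp rmorph_prod; apply: eq_bigr => i _ /=.
by rewrite rmorphB rmorph1 /= comp_Xn_poly -exprM.
Qed.

Lemma qp_approx2 K : eqm K (qp K) (sq (qp K) * sq (Op K)).
Proof.
rewrite {1}qp_sq /sq -rmorphM /= -AA2.
apply: eqm_comp => //; apply: eqm_sym; apply: AA_trunc; lia.
Qed.

Lemma Op_compN K : Op K * (Op K \Po - 'X) = sq (Op K).
Proof.
rewrite /sq /Op !rmorph_prod -big_split; apply: eq_bigr => i _ /=.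
rewrite !rmorphB !rmorph1 /= !comp_Xn_poly [(- 'X) ^+ _]exprNn (@sgn_oddn _ i) // -exprM.
rewrite (mulnC 2 (2 * (nat_of_ord i) + 1)) exprM; set Y := 'X^(2 * _ + 1).
ring.
Qed.

Lemma qp_compN K : qp K \Po - 'X = qp K.
Proof.
rewrite /qp !rmorph_prod; apply: eq_bigr => i _ /=.
by rewrite !rmorphB !rmorph1 /= !comp_Xn_poly [(- 'X) ^+ _]exprNn (@sgn_even _ i.+1) // mul1r.
Qed.

Lemma thth K : eqm K (th K * thm K) (sq (thm K) ^+ 2).
Proof.
have j1 := @jtp K.
have j2 : eqm K (th K) (qp K * (Op K \Po - 'X) ^+ 2).
  rewrite -th_compN -qp_compN -rmorphXn -rmorphM; exact: eqm_compN.
have j3 : eqm K (sq (thm K)) (sq (qp K) * sq (Op K) ^+ 2).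
  rewrite /sq -rmorphXn -rmorphM; apply: eqm_comp => //.
have q2 := @qp_approx2 K.
apply: eqm_trans (eqmM j2 j1) _.
have -> : qp K * (Op K \Po - 'X) ^+ 2 * (qp K * Op K ^+ 2)
   = qp K ^+ 2 * (Op K * (Op K \Po - 'X)) ^+ 2 by ring.
rewrite Op_compN.
have a1 := @eqmX K _ _ 2 q2. have a2 := @eqmX K _ _ 2 j3.
apply: eqm_trans (eqmM a1 (@eqm_refl K (sq (Op K) ^+ 2))) _.
apply: eqm_sym; apply: eqm_trans a2 _.
have -> : (sq (qp K) * sq (Op K) ^+ 2) ^+ 2 = (sq (qp K) * sq (Op K)) ^+ 2 * sq (Op K) ^+ 2 by ring.
exact: eqm_refl.
Qed.

Lemma sqD p q : sq (p + q) = sq p + sq q. Proof. exact: rmorphD. Qed.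
Lemma sqB p q : sq (p - q) = sq p - sq q. Proof. exact: rmorphB. Qed.
Lemma sqM p q : sq (p * q) = sq p * sq q. Proof. exact: rmorphM. Qed.
Lemma sqX p n : sq (p ^+ n) = sq p ^+ n. Proof. exact: rmorphXn. Qed.

Lemma cls_Ev4 K : cls 4 0 (sq (Ev K)).
Proof. exact: (cls_dvd _ (cls_sEv K)). Qed.
Lemma cls_Od4 K : cls 4 1 (Od K).
Proof. exact: (cls_dvd _ (cls_Od K)). Qed.
Lemma cls_sOd4 K : cls 4 2 (sq (Od K)).
Proof. exact: (cls_dvd _ (cls_sOd K)). Qed.

Lemma J12 K : eqm K (Ev K ^+ 2) (sq (Ev K) ^+ 2 + sq (Od K) ^+ 2) /\
              eqm K (Od K ^+ 2) ((sq (Ev K) * sq (Od K)) *+ 2).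
Proof.
have h := @thth K.
rewrite thE thmE sqB in h.
have e1 : (Ev K + Od K) * (Ev K - Od K) = Ev K ^+ 2 - Od K ^+ 2 by ring.
have e2 : (sq (Ev K) - sq (Od K)) ^+ 2
   = (sq (Ev K) ^+ 2 + sq (Od K) ^+ 2) - (sq (Ev K) * sq (Od K)) *+ 2 by ring.
rewrite e1 e2 in h.
have c1 : cls 4 0 (Ev K ^+ 2) by apply: (cls_eq _ (@clsX _ _ _ 2 (cls_Ev K))).
have c2 : cls 4 2 (Od K ^+ 2) by apply: (cls_eq _ (@clsX _ _ _ 2 (cls_Od4 K))).
have c3 : cls 4 0 (sq (Ev K) ^+ 2 + sq (Od K) ^+ 2).
  apply: clsD; first by apply: (cls_eq _ (@clsX _ _ _ 2 (cls_Ev4 K))).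
  by apply: (cls_eq _ (@clsX _ _ _ 2 (cls_sOd4 K))).
have c4 : cls 4 2 ((sq (Ev K) * sq (Od K)) *+ 2).
  by apply: clsMn; apply: (cls_eq _ (clsM (cls_Ev4 K) (cls_sOd4 K))).
split=> i hi; have := h i hi; rewrite !coefB.
  case: (eqVneq (i %% 4) 0)%N => hm.
    by rewrite (c2 i) ?(c4 i) ?hm // !subr0.
  by rewrite (c1 i) ?(c3 i) ?mod0n.
case: (eqVneq (i %% 4) 2)%N => hm.
  by rewrite (c1 i) ?(c3 i) ?hm // !sub0r => /oppr_inj.
by rewrite (c2 i) ?(c4 i).
Qed.

Definition Dg N : P := \prod_(i < N) (\sum_(k < N.+1) 'X^(4 * i.+1 * k)).

Lemma eta_eq N : eta_quot_trunc N = AA N ^+ 4 * qp N ^+ 4 * Dg N ^+ 3.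
Proof.
rewrite /eta_quot_trunc big_add1 /= big_mkord !big_split /=.
by rewrite -/(AA N) -/(qp N) -/(Dg N); ring.
Qed.

Lemma CD N : eqm N (sq (qp N) * Dg N) 1.
Proof.
rewrite /sq /qp /Dg rmorph_prod -big_split /=.
rewrite -[X in eqm _ _ X](@big1_eq P 1 (@GRing.mul P) _ (index_enum 'I_N) xpredT).
apply: eqm_prod => i.
rewrite rmorphB rmorph1 /= comp_Xn_poly -exprM.
set x : P := 'X^(4 * i.+1).
have -> : ('X^(2 * (2 * i.+1)) : P) = x by rewrite /x; congr 'X^_; lia.
have -> : \sum_(k < N.+1) ('X^(4 * i.+1 * k) : P) = \sum_(k < N.+1) x ^+ k.
  by apply: eq_bigr => k _; rewrite /x -exprM.
have e := subrX1 x N.+1.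
have -> : (1 - x) * \sum_(k < N.+1) x ^+ k = 1 - x ^+ N.+1.
  set S := \sum_(k < N.+1) x ^+ k.
  have -> : (1 - x) * S = - ((x - 1) * S) by ring.
  by rewrite -e opprB.
rewrite /x -exprM; apply: eqm_1X; nia.
Qed.

Lemma eta_thm N : eqm N (eta_quot_trunc N) (thm N ^+ 2 * sq (thm N) ^+ 3).
Proof.
set a := AA N; set b := qp N; set o := Op N; set c := sq b; set so := sq o; set d := Dg N.
have fa : eqm N a (b * o).
  rewrite /a /b /o -AA2; apply: eqm_sym; apply: AA_trunc; lia.
have fb : eqm N b (c * so) by exact: qp_approx2.
have fcd : eqm N (c * d) 1 by exact: CD.
have ft : eqm N (thm N) (b * o ^+ 2) by exact: jtp.
have fst : eqm N (sq (thm N)) (c * so ^+ 2).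
  by rewrite /c /so -sqX -sqM; apply: eqm_comp.
rewrite eta_eq -/a -/b -/d.
have s1 : eqm N (a ^+ 4 * b ^+ 4 * d ^+ 3) ((b * o) ^+ 4 * b ^+ 4 * d ^+ 3).
  by apply: eqmM => //; apply: eqmM => //; apply: eqmX.
apply: eqm_trans s1 _.
have -> : (b * o) ^+ 4 * b ^+ 4 * d ^+ 3 = b ^+ 8 * (o ^+ 4 * d ^+ 3) by ring.
have s2 : eqm N (b ^+ 8 * (o ^+ 4 * d ^+ 3)) ((c * so) ^+ 8 * (o ^+ 4 * d ^+ 3)).
  by apply: eqmM => //; apply: eqmX.
apply: eqm_trans s2 _.
have -> : (c * so) ^+ 8 * (o ^+ 4 * d ^+ 3) = (c * d) ^+ 3 * (c ^+ 5 * so ^+ 8 * o ^+ 4) by ring.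
have s3 : eqm N ((c * d) ^+ 3 * (c ^+ 5 * so ^+ 8 * o ^+ 4)) (1 ^+ 3 * (c ^+ 5 * so ^+ 8 * o ^+ 4)).
  by apply: eqmM => //; apply: eqmX.
apply: eqm_trans s3 _; rewrite expr1n mul1r.
have t1 : eqm N (thm N ^+ 2 * sq (thm N) ^+ 3) ((b * o ^+ 2) ^+ 2 * (c * so ^+ 2) ^+ 3).
  by apply: eqmM; apply: eqmX.
apply: eqm_sym; apply: eqm_trans t1 _.
have -> : (b * o ^+ 2) ^+ 2 * (c * so ^+ 2) ^+ 3 = b ^+ 2 * (o ^+ 4 * c ^+ 3 * so ^+ 6) by ring.
have t2 : eqm N (b ^+ 2 * (o ^+ 4 * c ^+ 3 * so ^+ 6)) ((c * so) ^+ 2 * (o ^+ 4 * c ^+ 3 * so ^+ 6)).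
  by apply: eqmM => //; apply: eqmX.
apply: eqm_trans t2 _.
have -> : (c * so) ^+ 2 * (o ^+ 4 * c ^+ 3 * so ^+ 6) = c ^+ 5 * so ^+ 8 * o ^+ 4 by ring.
exact: eqm_refl.
Qed.

Lemma sq_abs (a : int) : a ^+ 2 = ((absz a) ^ 2)%:Z.
Proof. by rewrite -abszX abszE ger0_norm // sqr_ge0. Qed.

Lemma quadQE a b c d e :
  quadQ a b c d e = (absz a ^ 2 + absz b ^ 2 + 2 * absz c ^ 2 + 2 * absz d ^ 2 + 2 * absz e ^ 2)%N%:Z.
Proof. by rewrite /quadQ !sq_abs !PoszD !PoszM. Qed.

Lemma th_sum n : th n = \sum_(j <- box n) 'X^(absz j ^ 2).
Proof. by []. Qed.

Lemma sth_sum n : sq (th n) = \sum_(j <- box n) 'X^(2 * absz j ^ 2).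
Proof.
rewrite /sq th_sum rmorph_sum; apply: eq_bigr => j _ /=.
by rewrite comp_Xn_poly -exprM mulnC.
Qed.

Lemma coefX5 (x y z w v n : nat) :
  (('X^x * ('X^y * ('X^z * ('X^w * 'X^v)))) : P)`_n = (n == (x + y + z + w + v)%N)%:R.
Proof. by rewrite -!exprD coefXn !addnA. Qed.

Lemma r_coef n : (r n)%:R = (th n ^+ 2 * sq (th n) ^+ 3)`_n.
Proof.
have -> : th n ^+ 2 * sq (th n) ^+ 3 = th n * (th n * (sq (th n) * (sq (th n) * sq (th n)))) by ring.
rewrite sth_sum th_sum.
set B := box n.
have E1 : (\sum_(j <- B) 'X^(2 * absz j ^ 2)) * (\sum_(j <- B) 'X^(2 * absz j ^ 2))
   = \sum_(d <- B) \sum_(e <- B) 'X^(2 * absz d ^ 2) * 'X^(2 * absz e ^ 2) :> P.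
  by rewrite big_distrl; apply: eq_bigr => d _; rewrite big_distrr.
rewrite E1.
have E2 : (\sum_(j <- B) 'X^(2 * absz j ^ 2)) *
   (\sum_(d <- B) \sum_(e <- B) 'X^(2 * absz d ^ 2) * 'X^(2 * absz e ^ 2))
   = \sum_(c <- B) \sum_(d <- B) \sum_(e <- B)
        'X^(2 * absz c ^ 2) * ('X^(2 * absz d ^ 2) * 'X^(2 * absz e ^ 2)) :> P.
  rewrite big_distrl; apply: eq_bigr => c _; rewrite big_distrr; apply: eq_bigr => d _.
  by rewrite big_distrr.
rewrite E2.
have E3 : (\sum_(j <- B) 'X^(absz j ^ 2)) * (\sum_(c <- B) \sum_(d <- B) \sum_(e <- B)
        'X^(2 * absz c ^ 2) * ('X^(2 * absz d ^ 2) * 'X^(2 * absz e ^ 2)))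
   = \sum_(b <- B) \sum_(c <- B) \sum_(d <- B) \sum_(e <- B)
        'X^(absz b ^ 2) * ('X^(2 * absz c ^ 2) * ('X^(2 * absz d ^ 2) * 'X^(2 * absz e ^ 2))) :> P.
  rewrite big_distrl; apply: eq_bigr => b _; rewrite big_distrr; apply: eq_bigr => c _.
  rewrite big_distrr; apply: eq_bigr => d _.
  by rewrite big_distrr.
rewrite E3.
rewrite big_distrl coef_sum /r natr_sum; apply: eq_bigr => a _.
rewrite big_distrr coef_sum natr_sum; apply: eq_bigr => b _.
rewrite big_distrr coef_sum natr_sum; apply: eq_bigr => c _.
rewrite big_distrr coef_sum natr_sum; apply: eq_bigr => d _.
rewrite big_distrr coef_sum natr_sum; apply: eq_bigr => e _.
apply: esym; apply: etrans (coefX5 _ _ _ _ _ _) _.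
by rewrite quadQE eqz_nat eq_sym.
Qed.

Lemma cls_triv p : cls 1 0 p.
Proof. by move=> i; rewrite !modn1 eqxx. Qed.
Lemma cls_sq2 p : cls 2 0 (sq p).
Proof. exact: (cls_comp (k:=2) _ (cls_triv p)). Qed.
Lemma cls_Ev2 K : cls 2 0 (Ev K).
Proof. exact: (cls_dvd _ (cls_Ev K)). Qed.
Lemma cls_Od2 K : cls 2 1 (Od K).
Proof. exact: (cls_dvd _ (cls_Od K)). Qed.
Lemma cls_zero d c p i : cls d c p -> (i %% d != c %% d)%N -> p`_i = 0.
Proof. by move=> h; apply: h. Qed.

Lemma coef_sq p m : (sq p)`_(2 * m) = p`_m.
Proof. by rewrite /sq coef_comp_poly_Xn // dvdn_mulr // mulKn. Qed.

Lemma sqth K : sq (th K) = sq (Ev K) + sq (Od K).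
Proof. by rewrite thE sqD. Qed.
Lemma sqthm K : sq (thm K) = sq (Ev K) - sq (Od K).
Proof. by rewrite thmE sqB. Qed.

Lemma EO_sq K : eqm K (Ev K ^+ 2 + Od K ^+ 2) (sq (th K) ^+ 2).
Proof.
have [j1 j2] := @J12 K.
rewrite sqth.
have -> : (sq (Ev K) + sq (Od K)) ^+ 2
   = (sq (Ev K) ^+ 2 + sq (Od K) ^+ 2) + (sq (Ev K) * sq (Od K)) *+ 2 by ring.
exact: eqmD.
Qed.

Lemma even_red K m : (2 * m <= K)%N ->
  (th K ^+ 2 * sq (th K) ^+ 3)`_(2 * m) = (th K ^+ 5)`_m /\
  (thm K ^+ 2 * sq (thm K) ^+ 3)`_(2 * m) = (th K ^+ 2 * thm K ^+ 3)`_m.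
Proof.
move=> hm; set E := Ev K; set O := Od K.
have h := @EO_sq K.
have cEO : forall Z, cls 2 1 (((E * O) *+ 2) * sq Z ^+ 3).
  move=> Z.
  have c1 : cls 2 1 (E * O) by apply: (cls_eq _ (clsM (cls_Ev2 K) (cls_Od2 K))).
  have c2 : cls 2 1 ((E * O) *+ 2) by apply: clsMn.
  have c3 : cls 2 0 (sq Z ^+ 3) by apply: (cls_eq _ (@clsX _ _ _ 3 (cls_sq2 Z))).
  by apply: (cls_eq _ (clsM c2 c3)).
have hm2 : ((2 * m) %% 2 != 1 %% 2)%N by rewrite modnMr.
split.
  have -> : th K ^+ 2 * sq (th K) ^+ 3
     = (E ^+ 2 + O ^+ 2) * sq (th K) ^+ 3 + ((E * O) *+ 2) * sq (th K) ^+ 3.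
    by rewrite {1}thE -/E -/O; ring.
  rewrite coefD (cls_zero (cEO _) hm2) addr0.
  rewrite (eqmM h (@eqm_refl K (sq (th K) ^+ 3))) // -exprD -sqX coef_sq.
  by [].
have -> : thm K ^+ 2 * sq (thm K) ^+ 3
   = (E ^+ 2 + O ^+ 2) * sq (thm K) ^+ 3 - ((E * O) *+ 2) * sq (thm K) ^+ 3.
  by rewrite {1}thmE -/E -/O; ring.
rewrite coefB (cls_zero (cEO _) hm2) subr0.
by rewrite (eqmM h (@eqm_refl K (sq (thm K) ^+ 3))) // -sqX -sqX -sqM coef_sq.
Qed.

Lemma odd_case K n : (n <= K)%N -> odd n ->
  ((n %% 4 = 1)%N -> (thm K ^+ 2 * sq (thm K) ^+ 3)`_n = - (th K ^+ 2 * sq (th K) ^+ 3)`_n) /\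
  ((n %% 4 = 3)%N -> (thm K ^+ 2 * sq (thm K) ^+ 3)`_n = (th K ^+ 2 * sq (th K) ^+ 3)`_n).
Proof.
move=> hn hodd; set E := Ev K; set O := Od K; set sE := sq E; set sO := sq O.
set Ap := E * O * (sE ^+ 3 + (sE * sO ^+ 2) *+ 3).
set Bp := E * O * ((sE ^+ 2 * sO) *+ 3 + sO ^+ 3).
have e1 : th K ^+ 2 * sq (th K) ^+ 3 = (E ^+ 2 + O ^+ 2) * (sE + sO) ^+ 3 + (Ap + Bp) *+ 2.
  by rewrite sqth thE -/E -/O -/sE -/sO /Ap /Bp; ring.
have e2 : thm K ^+ 2 * sq (thm K) ^+ 3 = (E ^+ 2 + O ^+ 2) * (sE - sO) ^+ 3 - (Ap - Bp) *+ 2.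
  by rewrite sqthm thmE -/E -/O -/sE -/sO /Ap /Bp; ring.
have hn2 : (n %% 2 != 0 %% 2)%N by rewrite modn2 hodd.
have cE2 : cls 2 0 (E ^+ 2 + O ^+ 2).
  apply: clsD; first by apply: (cls_eq _ (@clsX _ _ _ 2 (cls_Ev2 K))).
  by apply: (cls_eq _ (@clsX _ _ _ 2 (cls_Od2 K))).
have cs1 : cls 2 0 (sE + sO) by apply: clsD; apply: cls_sq2.
have cs2 : cls 2 0 (sE - sO) by apply: clsB; apply: cls_sq2.
have z1 : ((E ^+ 2 + O ^+ 2) * (sE + sO) ^+ 3)`_n = 0.
  apply: (cls_zero _ hn2); apply: (cls_eq _ (clsM cE2 (@clsX _ _ _ 3 cs1))) => //.
have z2 : ((E ^+ 2 + O ^+ 2) * (sE - sO) ^+ 3)`_n = 0.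
  apply: (cls_zero _ hn2); apply: (cls_eq _ (clsM cE2 (@clsX _ _ _ 3 cs2))) => //.
have cEO : cls 4 1 (E * O) by apply: (cls_eq _ (clsM (cls_Ev K) (cls_Od4 K))).
have cA : cls 4 1 Ap.
  apply: (cls_eq _ (clsM cEO _)) => //.
  apply: clsD; first by apply: (cls_eq _ (@clsX _ _ _ 3 (cls_Ev4 K))).
  apply: clsMn; apply: (cls_eq _ (clsM (cls_Ev4 K) (@clsX _ _ _ 2 (cls_sOd4 K)))) => //.
have cB : cls 4 3 Bp.
  apply: (cls_eq _ (clsM cEO _)) => //.
  apply: (@clsD _ 2); last by apply: (cls_eq _ (@clsX _ _ _ 3 (cls_sOd4 K))).
  apply: clsMn; apply: (cls_eq _ (clsM (@clsX _ _ _ 2 (cls_Ev4 K)) (cls_sOd4 K))) => //.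
rewrite e1 e2 !(coefD, coefN, coefMn) z1 z2 !add0r.
split=> h4.
  have hB : Bp`_n = 0 by apply: (cls_zero cB); rewrite h4.
  by rewrite hB oppr0 !addr0.
have hA : Ap`_n = 0 by apply: (cls_zero cA); rewrite h4.
rewrite hA !add0r; ring.
Qed.

Lemma crux K m : (m <= K)%N -> (m %% 8 = 5)%N ->
  (Od K ^+ 5)`_m = (Ev K ^+ 4 * Od K)`_m *+ 2.
Proof.
move=> hm h8; have [j1 j2] := @J12 K.
set E := Ev K; set O := Od K; set sE := sq E; set sO := sq O.
have a1 : (O ^+ 5)`_m = ((sE ^+ 2 * sO ^+ 2 * O) *+ 4)`_m.
  have -> : O ^+ 5 = O * (O ^+ 2) ^+ 2 by ring.
  rewrite (eqmM (@eqm_refl K O) (@eqmX K _ _ 2 j2)) // -/sE -/sO.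
  by have -> : O * (sE * sO *+ 2) ^+ 2 = sE ^+ 2 * sO ^+ 2 * O *+ 4 by ring.
have a2 : (E ^+ 4 * O)`_m = ((sE ^+ 4 + sO ^+ 4) * O + (sE ^+ 2 * sO ^+ 2 * O) *+ 2)`_m.
  have -> : E ^+ 4 * O = (E ^+ 2) ^+ 2 * O by ring.
  rewrite (eqmM (@eqmX K _ _ 2 j1) (@eqm_refl K O)) // -/sE -/sO.
  by have -> : (sE ^+ 2 + sO ^+ 2) ^+ 2 * O = (sE ^+ 4 + sO ^+ 4) * O + sE ^+ 2 * sO ^+ 2 * O *+ 2 by ring.
have z : ((sE ^+ 4 + sO ^+ 4) * O)`_m = 0.
  apply: (@cls_zero 8 1); last by rewrite h8.
  have c1 : cls 8 0 (sE ^+ 4 + sO ^+ 4).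
    apply: clsD; first by apply: (cls_eq _ (@clsX _ _ _ 4 (cls_sEv K))).
    have c2 : cls 8 2 sO by apply: (cls_dvd _ (cls_sOd K)).
    by apply: (cls_eq _ (@clsX _ _ _ 4 c2)).
  by apply: (cls_eq _ (clsM c1 (cls_Od K))).
by rewrite a1 a2 coefMn coefD z add0r coefMn -mulrnA.
Qed.

Definition Mc K a b m := (Ev K ^+ a * Od K ^+ b)`_m.

Lemma mexp K m :
  (th K ^+ 5)`_m = Mc K 5 0 m + Mc K 4 1 m *+ 5 + Mc K 3 2 m *+ 10 + Mc K 2 3 m *+ 10
                   + Mc K 1 4 m *+ 5 + Mc K 0 5 m /\
  (th K ^+ 2 * thm K ^+ 3)`_m = Mc K 5 0 m - Mc K 4 1 m - Mc K 3 2 m *+ 2 + Mc K 2 3 m *+ 2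
                   + Mc K 1 4 m - Mc K 0 5 m.
Proof.
rewrite /Mc thE thmE; set E := Ev K; set O := Od K; split.
  have -> : (E + O) ^+ 5 = E ^+ 5 * O ^+ 0 + (E ^+ 4 * O ^+ 1) *+ 5 + (E ^+ 3 * O ^+ 2) *+ 10
     + (E ^+ 2 * O ^+ 3) *+ 10 + (E ^+ 1 * O ^+ 4) *+ 5 + E ^+ 0 * O ^+ 5 by ring.
  by rewrite !(coefD, coefMn).
have -> : (E + O) ^+ 2 * (E - O) ^+ 3 = E ^+ 5 * O ^+ 0 - E ^+ 4 * O ^+ 1 - (E ^+ 3 * O ^+ 2) *+ 2
     + (E ^+ 2 * O ^+ 3) *+ 2 + E ^+ 1 * O ^+ 4 - E ^+ 0 * O ^+ 5 by ring.
by rewrite !(coefD, coefN, coefMn).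
Qed.

Lemma Mc_zero K a b m : (m %% 4 != b %% 4)%N -> Mc K a b m = 0.
Proof.
move=> h; apply: (cls_zero _ h).
by apply: (cls_eq _ (clsM (@clsX _ _ _ a (cls_Ev K)) (@clsX _ _ _ b (cls_Od4 K)))); rewrite muln0 muln1.
Qed.

Lemma M05_zero K m : (m %% 8 != 5)%N -> Mc K 0 5 m = 0.
Proof.
move=> h; rewrite /Mc expr0 mul1r; apply: (@cls_zero 8 5); last by [].
by apply: (cls_eq _ (@clsX _ _ _ 5 (cls_Od K))).
Qed.

Lemma M05_crux K m : (m <= K)%N -> (m %% 8 = 5)%N -> Mc K 0 5 m = Mc K 4 1 m *+ 2.
Proof. by move=> h1 h2; rewrite /Mc expr0 mul1r expr1 crux. Qed.

Lemma M50_r N m : (N = 2 * m)%N -> (m %% 4 = 0)%N -> Mc N 5 0 m = (r (N %/ 4))%:R.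
Proof.
move=> hN hm.
have e1 : Mc N 5 0 m = (th N./2 ^+ 5)`_(m %/ 4).
  rewrite /Mc expr0 mulr1 Ev_J3 -rmorphXn coef_comp_poly_Xn //.
  by have -> : dvdn 4 m by apply/dvdnP; exists (m %/ 4)%N; lia.
have e2 : (N %/ 4 = 2 * (m %/ 4))%N by lia.
have [eR _] := @even_red (N %/ 4) (m %/ 4) (eq_leq (esym e2)).
rewrite -e2 in eR; rewrite r_coef eR e1.
have t1 : eqm (m %/ 4) (th N./2) (th (m %/ 4)) by apply: th_trunc; rewrite -divn2; lia.
have t2 : eqm (m %/ 4) (th (N %/ 4)) (th (m %/ 4)) by apply: th_trunc; lia.
by rewrite (@eqmX _ _ _ 5 t1) // (@eqmX _ _ _ 5 t2).
Qed.

Ltac decide_ifs :=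
  repeat match goal with
  | |- context [if (?a == ?b)%N then _ else _] =>
      first [ have -> : (a == b)%N = false by apply/eqP; lia
            | have -> : (a == b)%N = true by apply/eqP; lia ]
  end.

Theorem lemma6p2 (N : nat) : eta_quot_coef N = rhs_coef N.
Proof.
have eL : eta_quot_coef N = (thm N ^+ 2 * sq (thm N) ^+ 3)`_N by rewrite /eta_quot_coef (eta_thm (leqnn N)).
have eR := r_coef N.
rewrite eL.
case: (boolP (odd N)) => hodd.
  have [h1 h3] := @odd_case N N (leqnn N) hodd.
  have h2 : (N %% 2 = 1)%N by rewrite modn2 hodd.
  have [h41|h43] : (N %% 4 = 1)%N \/ (N %% 4 = 3)%N by lia.
    by rewrite (h1 h41) -eR /rhs_coef h41 eqxx.
  rewrite (h3 h43) -eR /rhs_coef; decide_ifs; by [].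
have h2 : (N %% 2 = 0)%N by rewrite modn2 (negbTE hodd).
set m := (N %/ 2)%N.
have hN : (N = 2 * m)%N by rewrite /m; lia.
have [eR2 eL2] := @even_red N m (eq_leq (esym hN)).
rewrite -hN in eR2 eL2.
rewrite eL2; rewrite eR2 in eR.
have [mR mL] := mexp N m.
rewrite mL; rewrite mR in eR.
have hmN : (m <= N)%N by lia.
have z := @Mc_zero N.
have z5 := @M05_zero N m.
have hm8 : (m %% 8 < 8)%N by rewrite ltn_mod.
rewrite /rhs_coef eR.
case H: (m %% 8)%N hm8 => [|[|[|[|[|[|[|[|v]]]]]]]] _ //.
-
  decide_ifs.
  rewrite -(@M50_r N m) //; last by lia.
  rewrite (z 4%N 1%N) ?(z 3%N 2%N) ?(z 2%N 3%N) ?z5; try (apply/eqP; lia).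
  by field.
- decide_ifs.
  rewrite (z 5%N 0%N) ?(z 3%N 2%N) ?(z 2%N 3%N) ?(z 1%N 4%N) ?z5; try (apply/eqP; lia).
  by field.
- decide_ifs.
  rewrite (z 5%N 0%N) ?(z 4%N 1%N) ?(z 2%N 3%N) ?(z 1%N 4%N) ?z5; try (apply/eqP; lia).
  by field.
- decide_ifs.
  rewrite (z 5%N 0%N) ?(z 4%N 1%N) ?(z 3%N 2%N) ?(z 1%N 4%N) ?z5; try (apply/eqP; lia).
  by field.
- decide_ifs.
  rewrite -(@M50_r N m) //; last by lia.
  rewrite (z 4%N 1%N) ?(z 3%N 2%N) ?(z 2%N 3%N) ?z5; try (apply/eqP; lia).
  by field.
- decide_ifs.
  rewrite (M05_crux hmN H).
  rewrite (z 5%N 0%N) ?(z 3%N 2%N) ?(z 2%N 3%N) ?(z 1%N 4%N); try (apply/eqP; lia).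
  by field.
- decide_ifs.
  rewrite (z 5%N 0%N) ?(z 4%N 1%N) ?(z 2%N 3%N) ?(z 1%N 4%N) ?z5; try (apply/eqP; lia).
  by field.
- decide_ifs.
  rewrite (z 5%N 0%N) ?(z 4%N 1%N) ?(z 3%N 2%N) ?(z 1%N 4%N) ?z5; try (apply/eqP; lia).
  by field.
Qed.
Print Assumptions lemma6p2.
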